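(* Let $S$ be a self-adjoint subspace in $X^2$, and let $A$ and $S+A$ be closed Hermitian subspaces in $X^2$, with $D(S)\subset D(A)$. Let $Q:A(0)^\perp\to S(0)^\perp$ be the orthogonal projection (under these hypotheses $A(0)\subset S(0)$, so $S(0)^\perp\subset A(0)^\perp$). If $QA_s$ is $S_s$-bounded with $S_s$-bound less than $1$, then $S+A$ is a self-adjoint subspace in $X^2$.
   Context: $X$ is a complex Hilbert space and $X^2=X\times X$ carries the inner product $\langle (x,f),(y,g)\rangle=\langle x,y\rangle+\langle f,g\rangle$. A subspace $T$ in $X^2$ means a linear subspace of $X^2$ (a linear relation); a linear operator in $X$ is identified with its graph. Notation: $D(T)=\{x:(x,f)\in T \text{ for some } f\}$, $T(x)=\{f:(x,f)\in T\}$. The adjoint is $T^*=\{(y,g)\in X^2:\langle g,x\rangle=\langle y,f\rangle \text{ for all }(x,f)\in T\}$; $T$ is Hermitian if $T\subset T^*$ and self-adjoint if $T=T^*$. For subspaces $S,A$ in $X^2$, $S+A=\{(x,f+g):(x,f)\in S,(x,g)\in A\}$. For a closed subspace $T$, set $T_\infty=\{(0,g)\in X^2:(0,g)\in T\}$ and $T_s=T\ominus T_\infty$ (orthogonal complement of $T_\infty$ in $T$), so $T=T_s\oplus T_\infty$; $T_s$ is the graph of a linear operator (the operator part of $T$) with $D(T_s)=D(T)$ and $R(T_s)\subset T(0)^\perp$. For linear operators $U,V$ in $X$: $U$ is $V$-bounded if $D(V)\subset D(U)$ and there is $c\ge0$ with $\|Ux\|\le c(\|x\|+\|Vx\|)$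 for $x\in D(V)$; the $V$-bound of $U$ is the infimum of all $a\ge 0$ for which some $b\ge0$ satisfies $\|Ux\|\le a\|Vx\|+b\|x\|$ for all $x\in D(V)$. *)

(* Defs.v *)
From Stdlib Require Import Reals.
Open Scope R_scope.

Record C := mkC { Re : R; Im : R }.
Definition C0 : C := mkC 0 0.
Definition C1 : C := mkC 1 0.
Definition Cadd (a b : C) : C := mkC (Re a + Re b) (Im a + Im b).
Definition Cmul (a b : C) : C :=
  mkC (Re a * Re b - Im a * Im b) (Re a * Im b + Im a * Re b).
Definition Cconj (a : C) : C := mkC (Re a) (- Im a).

Record Hilbert := {
  carrier :> Type;
  vzero : carrier;
  vadd : carrier -> carrier -> carrier;
  vopp : carrier -> carrier;
  vscal : C -> carrier -> carrier;
  ip : carrier -> carrier -> C;   (* <x,y>, linear in x, conjugate-linear in y *)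
  vadd_assoc : forall x y z, vadd x (vadd y z) = vadd (vadd x y) z;
  vadd_comm : forall x y, vadd x y = vadd y x;
  vadd_zero : forall x, vadd x vzero = x;
  vadd_opp : forall x, vadd x (vopp x) = vzero;
  vscal_one : forall x, vscal C1 x = x;
  vscal_assoc : forall a b x, vscal a (vscal b x) = vscal (Cmul a b) x;
  vscal_distr_v : forall a x y, vscal a (vadd x y) = vadd (vscal a x) (vscal a y);
  vscal_distr_s : forall a b x, vscal (Cadd a b) x = vadd (vscal a x) (vscal b x);
  ip_conj_sym : forall x y, ip y x = Cconj (ip x y);
  ip_add_l : forall x y z, ip (vadd x y) z = Cadd (ip x z) (ip y z);
  ip_scal_l : forall a x y, ip (vscal a x) y = Cmul a (ip x y);
  ip_pos_im : forall x, Im (ip x x) = 0;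
  ip_pos_re : forall x, 0 <= Re (ip x x);
  ip_definite : forall x, Re (ip x x) = 0 -> x = vzero;
  complete : forall u : nat -> carrier,
    (forall eps, eps > 0 -> exists N, forall n m, (n >= N)%nat -> (m >= N)%nat ->
        sqrt (Re (ip (vadd (u n) (vopp (u m))) (vadd (u n) (vopp (u m))))) < eps) ->
    exists l, forall eps, eps > 0 -> exists N, forall n, (n >= N)%nat ->
        sqrt (Re (ip (vadd (u n) (vopp l)) (vadd (u n) (vopp l)))) < eps
}.

Arguments vzero {h}.
Arguments vadd {h}.
Arguments vopp {h}.
Arguments vscal {h}.
Arguments ip {h}.

Section HilbertDefs.
Variable X : Hilbert.

Definition vsub (x y : X) : X := vadd x (vopp y).
Definition norm (x : X) : R := sqrt (Re (ip x x)).

(* A "subspace in X^2" = linear relation, represented by its membership predicate *)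
Definition rel := X -> X -> Prop.

Definition is_subspace (T : rel) : Prop :=
  T vzero vzero /\
  (forall x f y g, T x f -> T y g -> T (vadd x y) (vadd f g)) /\
  (forall a x f, T x f -> T (vscal a x) (vscal a f)).

(* norm on X^2 induced by the inner product <(x,f),(y,g)> = <x,y> + <f,g> *)
Definition norm2 (x f : X) : R := sqrt (Re (ip x x) + Re (ip f f)).

Definition closed_rel (T : rel) : Prop :=
  forall (u v : nat -> X) (x f : X),
    (forall n, T (u n) (v n)) ->
    (forall eps, eps > 0 -> exists N, forall n, (n >= N)%nat ->
        norm2 (vsub (u n) x) (vsub (v n) f) < eps) ->
    T x f.

Definition dom (T : rel) (x : X) : Prop := exists f, T x f.
Definition mul0 (T : rel) (f : X) : Prop := T vzero f.

Definition adjoint (T : rel) : rel :=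
  fun y g => forall x f, T x f -> ip g x = ip y f.

Definition rel_incl (T U : rel) : Prop := forall x f, T x f -> U x f.
Definition rel_eq (T U : rel) : Prop := forall x f, T x f <-> U x f.

Definition hermitian (T : rel) : Prop := rel_incl T (adjoint T).
Definition self_adjoint (T : rel) : Prop := rel_eq T (adjoint T).

Definition rel_sum (S A : rel) : rel :=
  fun x h => exists f g, S x f /\ A x g /\ h = vadd f g.

Definition orth (M : X -> Prop) : X -> Prop :=
  fun y => forall z, M z -> ip y z = C0.

(* T_s = T ⊖ T_inf, where T_inf = {(0,g) : (0,g) in T};
   (x,f) ⊥ (0,g) in X^2 iff <f,g> = 0 *)
Definition op_part (T : rel) : rel :=
  fun x f => T x f /\ forall g, T vzero g -> Cadd (ip x vzero) (ip f g) = C0.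

Definition orth_proj (M : X -> Prop) (y z : X) : Prop :=
  M z /\ forall w, M w -> ip (vsub y z) w = C0.

Definition rel_comp (Q : X -> X -> Prop) (U : rel) : rel :=
  fun x z => exists g, U x g /\ Q g z.

Definition rel_bounded (U V : rel) : Prop :=
  (forall x, dom V x -> dom U x) /\
  exists c, 0 <= c /\
    forall x y z, V x y -> U x z -> norm z <= c * (norm x + norm y).

(* admissible constants a for the V-bound of U *)
Definition bound_const (U V : rel) (a : R) : Prop :=
  0 <= a /\ exists b, 0 <= b /\
    forall x y z, V x y -> U x z -> norm z <= a * norm y + b * norm x.

Definition is_inf (P : R -> Prop) (m : R) : Prop :=
  (forall a, P a -> m <= a) /\ (forall m', (forall a, P a -> m' <= a) -> m' <= m).

Definition rel_bound_lt (U V : rel) (r : R) : Prop :=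
  exists beta, is_inf (bound_const U V) beta /\ beta < r.

End HilbertDefs.

Arguments vsub {X}.
Arguments norm {X}.

(* Main.v *)
From Stdlib Require Import Reals Lra Psatz Classical ClassicalEpsilon.
Require Import Defs.
Open Scope R_scope.

Definition Copp (a : C) : C := mkC (- Re a) (- Im a).
Definition rs (r : R) : C := mkC r 0.

Lemma Ceq (a b : C) : Re a = Re b -> Im a = Im b -> a = b.
Proof. destruct a, b; simpl; intros; subst; reflexivity. Qed.

Ltac cunf := unfold Cadd, Cmul, Cconj, Copp, C0, C1, rs in *; simpl in *.
Ltac ceq := apply Ceq; cunf; ring.

Lemma vadd_zero_l (X : Hilbert) (x : X) : vadd vzero x = x.
Proof. rewrite vadd_comm; apply vadd_zero. Qed.

Lemma vadd_cancel (X : Hilbert) (x y z : X) : vadd x y = vadd x z -> y = z.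
Proof.
  intro H. assert (H2: vadd (vopp x) (vadd x y) = vadd (vopp x) (vadd x z)) by now rewrite H.
  rewrite !vadd_assoc, (vadd_comm _ (vopp x) x), vadd_opp, !vadd_zero_l in H2. exact H2.
Qed.

Lemma ip_zero_l (X : Hilbert) (y : X) : ip vzero y = C0.
Proof.
  pose proof (ip_add_l X vzero vzero y) as H. rewrite vadd_zero in H.
  destruct (ip vzero y) as [a b]. cunf. injection H; intros. apply Ceq; simpl; lra.
Qed.

Lemma ip_opp_l (X : Hilbert) (x y : X) : ip (vopp x) y = Copp (ip x y).
Proof.
  pose proof (ip_add_l X x (vopp x) y) as H. rewrite vadd_opp, ip_zero_l in H.
  apply Ceq; cunf; injection H; intros; lra.
Qed.

Lemma ip_add_r (X : Hilbert) (x y z : X) : ip x (vadd y z) = Cadd (ip x y) (ip x z).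
Proof.
  rewrite ip_conj_sym, ip_add_l, (ip_conj_sym X y x), (ip_conj_sym X z x). ceq.
Qed.

Lemma ip_scal_r (X : Hilbert) a (x y : X) : ip x (vscal a y) = Cmul (Cconj a) (ip x y).
Proof.
  rewrite ip_conj_sym, ip_scal_l, (ip_conj_sym X y x). ceq.
Qed.

Lemma ip_opp_r (X : Hilbert) (x y : X) : ip x (vopp y) = Copp (ip x y).
Proof.
  rewrite ip_conj_sym, ip_opp_l, (ip_conj_sym X y x). ceq.
Qed.

Lemma ip_zero_r (X : Hilbert) (y : X) : ip y vzero = C0.
Proof. rewrite ip_conj_sym, ip_zero_l. ceq. Qed.

Lemma ip_sub_l (X : Hilbert) (x y z : X) : ip (vsub x y) z = Cadd (ip x z) (Copp (ip y z)).
Proof. unfold vsub. rewrite ip_add_l, ip_opp_l. reflexivity. Qed.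
Lemma ip_sub_r (X : Hilbert) (x y z : X) : ip z (vsub x y) = Cadd (ip z x) (Copp (ip z y)).
Proof. unfold vsub. rewrite ip_add_r, ip_opp_r. reflexivity. Qed.

Ltac ipexp := repeat (rewrite ?ip_add_l, ?ip_add_r, ?ip_scal_l, ?ip_scal_r, ?ip_opp_l,
   ?ip_opp_r, ?ip_sub_l, ?ip_sub_r, ?ip_zero_l, ?ip_zero_r).

Lemma sub_zero (X : Hilbert) (u v : X) : vsub u v = vzero -> u = v.
Proof.
  unfold vsub; intro H. rewrite <- (vadd_zero X u), <- (vadd_opp X v), (vadd_comm X v), vadd_assoc, H.
  apply vadd_zero_l.
Qed.

Lemma veq_by_ip (X : Hilbert) (u v : X) : (forall w, ip u w = ip v w) -> u = v.
Proof.
  intro H. apply sub_zero. apply ip_definite.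
  rewrite ip_sub_l, H. cunf. ring.
Qed.

Ltac veq := apply veq_by_ip; let w := fresh "w" in intro w; ipexp; ceq.

Definition nsq {X : Hilbert} (x : X) := Re (ip x x).

Lemma nsq_ge0 (X : Hilbert) (x : X) : 0 <= nsq x.
Proof. apply ip_pos_re. Qed.

Lemma Re_sym (X : Hilbert) (x y : X) : Re (ip y x) = Re (ip x y).
Proof. rewrite ip_conj_sym; reflexivity. Qed.
Lemma Im_sym (X : Hilbert) (x y : X) : Im (ip y x) = - Im (ip x y).
Proof. rewrite ip_conj_sym; reflexivity. Qed.

Lemma test (X : Hilbert) (x y : X) : vsub (vadd x y) y = x.
Proof. veq. Qed.

Ltac ceqf := apply Ceq; cunf; field.
Ltac veqf := apply veq_by_ip; let w := fresh "w" in intro w; ipexp; ceqf.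


Lemma nsq_scal (X : Hilbert) a (x : X) : nsq (vscal a x) = (Re a * Re a + Im a * Im a) * nsq x.
Proof.
  unfold nsq. ipexp. pose proof (ip_pos_im X x). cunf. rewrite H. ring.
Qed.

Lemma re_bound (X : Hilbert) (a b : X) e : 0 < e ->
  2 * Re (ip a b) <= e * nsq a + / e * nsq b.
Proof.
  intro He. pose proof (nsq_ge0 X (vsub (vscal (rs e) a) b)) as H.
  unfold nsq in *. revert H. ipexp. pose proof (ip_pos_im X a).
  cunf. rewrite (Re_sym X a b), (Im_sym X a b). intro H1.
  assert (e * (2 * Re (ip a b)) <= e * (e * Re (ip a a) + / e * Re (ip b b))); [|nra].
  replace (e * (e * Re (ip a a) + / e * Re (ip b b))) with (e*e*Re (ip a a) + Re (ip b b)) by (field; lra).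
  nra.
Qed.

Lemma re_bound_abs (X : Hilbert) (a b : X) e : 0 < e ->
  2 * Rabs (Re (ip a b)) <= e * nsq a + / e * nsq b.
Proof.
  intro He. unfold Rabs; destruct (Rcase_abs _).
  - pose proof (re_bound X (vopp a) b e He). revert H. unfold nsq. ipexp. cunf. intro. lra.
  - apply re_bound; auto.
Qed.

Lemma im_bound_abs (X : Hilbert) (a b : X) e : 0 < e ->
  2 * Rabs (Im (ip a b)) <= e * nsq a + / e * nsq b.
Proof.
  intro He. pose proof (re_bound_abs X (vscal (mkC 0 1) a) b e He) as H.
  rewrite nsq_scal in H. revert H. ipexp. cunf.
  replace (0 * Re (ip a b) - 1 * Im (ip a b)) with (- Im (ip a b)) by ring.
  rewrite Rabs_Ropp. intro; lra.
Qed.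

Lemma nsq_add_le (X : Hilbert) (a b : X) e : 0 < e ->
  nsq (vadd a b) <= (1 + e) * nsq a + (1 + / e) * nsq b.
Proof.
  intro He. pose proof (re_bound X a b e He). unfold nsq in *. ipexp. cunf. rewrite (Re_sym X a b) in *. lra.
Qed.

Lemma nsq_add_le2 (X : Hilbert) (a b : X) : nsq (vadd a b) <= 2 * nsq a + 2 * nsq b.
Proof. pose proof (nsq_add_le X a b 1). rewrite Rinv_1 in H. lra. Qed.

Lemma nsq_zero (X : Hilbert) (a : X) : nsq a = 0 -> a = vzero.
Proof. apply ip_definite. Qed.

Lemma nsq_vzero (X : Hilbert) : nsq (@vzero X) = 0.
Proof. unfold nsq. rewrite ip_zero_l. reflexivity. Qed.

Definition conv {X : Hilbert} (u : nat -> X) (l : X) :=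
  forall eps, eps > 0 -> exists N, forall n, (n >= N)%nat -> nsq (vsub (u n) l) < eps.
Definition cauchy {X : Hilbert} (u : nat -> X) :=
  forall eps, eps > 0 -> exists N, forall n m, (n >= N)%nat -> (m >= N)%nat -> nsq (vsub (u n) (u m)) < eps.

Lemma sqrt_lt_sq x e : 0 <= x -> 0 < e -> x < e * e -> sqrt x < e.
Proof.
  intros. rewrite <- (sqrt_square e) by lra. apply sqrt_lt_1; nra.
Qed.

Lemma sq_lt_sqrt x e : 0 <= x -> 0 < e -> sqrt x < sqrt e -> x < e.
Proof.
  intros. apply sqrt_lt_0_alt. auto.
Qed.

Lemma complete' (X : Hilbert) (u : nat -> X) : cauchy u -> exists l, conv u l.
Proof.
  intro H. destruct (complete X u) as [l Hl].
  - intros eps He. destruct (H (eps*eps)) as [N HN]; [nra|]. exists N. intros n m Hn Hm.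
    apply sqrt_lt_sq; auto. apply nsq_ge0. apply HN; auto.
  - exists l. intros eps He. destruct (Hl (sqrt eps)) as [N HN]. apply sqrt_lt_R0; auto.
    exists N. intros n Hn. apply sq_lt_sqrt; auto. apply nsq_ge0. apply HN; auto.
Qed.

Lemma closed' (X : Hilbert) (T : rel X) u v x f : closed_rel X T -> (forall n, T (u n) (v n)) ->
  conv u x -> conv v f -> T x f.
Proof.
  intros HT Huv Hu Hv. apply (HT u v x f Huv). intros eps He.
  destruct (Hu (eps*eps/2)) as [N1 H1]; [nra|]. destruct (Hv (eps*eps/2)) as [N2 H2]; [nra|].
  exists (max N1 N2). intros n Hn. unfold norm2. apply sqrt_lt_sq; auto.
  pose proof (nsq_ge0 X (vsub (u n) x)). pose proof (nsq_ge0 X (vsub (v n) f)). unfold nsq in *. lra.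
  specialize (H1 n ltac:(lia)). specialize (H2 n ltac:(lia)). unfold nsq in *. lra.
Qed.

Lemma choice' {A B : Type} (P : A -> B -> Prop) : (forall a, exists b, P a b) -> exists f, forall a, P a (f a).
Proof. intro H. exists (fun a => proj1_sig (constructive_indefinite_description _ (H a))). intro a. apply proj2_sig. Qed.

Lemma small_inv eps : eps > 0 -> exists N, forall n, (n >= N)%nat -> / (INR n + 1) < eps.
Proof.
  intro He. destruct (INR_archimed eps 1 He) as [N HN]. exists N. intros n Hn.
  apply le_INR in Hn. pose proof (pos_INR N).
  apply (Rmult_lt_reg_l (INR n + 1)); [lra|]. rewrite Rinv_r by lra. nra.
Qed.

Lemma inv_le1 n : / (INR n + 1) <= 1.
Proof. pose proof (pos_INR n). rewrite <- Rinv_1. apply Rinv_le_contravar; lra. Qed.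
Lemma inv_pos n : 0 < / (INR n + 1).
Proof. pose proof (pos_INR n). apply Rinv_0_lt_compat. lra. Qed.

Lemma nsq_sub_sym (X : Hilbert) (a b : X) : nsq (vsub a b) = nsq (vsub b a).
Proof. unfold nsq. ipexp. cunf. ring. Qed.

Lemma parallelogram (X : Hilbert) (a b : X) : nsq (vadd a b) + nsq (vsub a b) = 2 * nsq a + 2 * nsq b.
Proof. unfold nsq. ipexp. cunf. ring. Qed.

Lemma conv_cauchy (X : Hilbert) (u : nat -> X) l : conv u l -> cauchy u.
Proof.
  intros H eps He. destruct (H (eps/4)) as [N HN]; [lra|]. exists N. intros n m Hn Hm.
  replace (vsub (u n) (u m)) with (vadd (vsub (u n) l) (vsub l (u m))) by veq.
  pose proof (nsq_add_le2 X (vsub (u n) l) (vsub l (u m))). rewrite (nsq_sub_sym X l) in H0.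
  pose proof (HN n Hn). pose proof (HN m Hm). lra.
Qed.

Lemma T_sub (X : Hilbert) (T : rel X) x f y g : is_subspace X T -> T x f -> T y g -> T (vsub x y) (vsub f g).
Proof.
  intros [H0 [Hadd Hsc]] H1 H2. specialize (Hsc (mkC (-1) 0) _ _ H2).
  specialize (Hadd _ _ _ _ H1 Hsc).
  replace (vsub x y) with (vadd x (vscal (mkC (-1) 0) y)) by veq.
  replace (vsub f g) with (vadd f (vscal (mkC (-1) 0) g)) by veq. exact Hadd.
Qed.

Lemma herm_sym (X : Hilbert) (T : rel X) x f : hermitian X T -> T x f -> ip f x = ip x f.
Proof. intros H Hx. exact (H x f Hx x f Hx). Qed.

Lemma nsq_resolv (X : Hilbert) (x f : X) t : ip f x = ip x f ->
  nsq (vsub f (vscal (mkC 0 t) x)) = nsq f + t * t * nsq x.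
Proof.
  intro Hs. assert (Im (ip f x) = 0).
  { pose proof (Im_sym X x f). rewrite Hs in H |- *. lra. }
  unfold nsq. ipexp. pose proof (ip_pos_im X x). cunf. rewrite (Re_sym X f x), (Im_sym X f x). rewrite H, H0. ring.
Qed.

Lemma quad_zero R0 W : 0 <= W -> (forall s, 0 <= -2*s*R0 + s*s*W) -> R0 = 0.
Proof.
  intros HW H. set (k := / (W+1)). assert (Hk : k * (W+1) = 1) by (unfold k; field; lra).
  assert (Hk0 : 0 < k) by (unfold k; apply Rinv_0_lt_compat; lra).
  specialize (H (R0 * k)).
  assert (0 <= - R0*R0*k*(1+k)) by nra.
  assert (R0 * R0 <= 0) by nra. nra.
Qed.

Lemma nsq_var_re (X : Hilbert) (r w : X) s :
  nsq (vsub r (vscal (rs s) w)) = nsq r - 2 * s * Re (ip r w) + s * s * nsq w.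
Proof.
  unfold nsq. ipexp. pose proof (ip_pos_im X w). cunf. rewrite (Re_sym X r w), (Im_sym X r w). rewrite H. ring.
Qed.

Lemma nsq_var_im (X : Hilbert) (r w : X) s :
  nsq (vsub r (vscal (mkC 0 s) w)) = nsq r - 2 * s * Im (ip r w) + s * s * nsq w.
Proof.
  unfold nsq. ipexp. pose proof (ip_pos_im X w). cunf. rewrite (Re_sym X r w), (Im_sym X r w). rewrite H. ring.
Qed.

Lemma proj_exists (X : Hilbert) (M : X -> Prop) :
  M vzero -> (forall a b, M a -> M b -> M (vadd a b)) -> (forall s a, M a -> M (vscal s a)) ->
  (forall u l, (forall n, M (u n)) -> conv u l -> M l) ->
  forall y, exists m, M m /\ forall w, M w -> ip (vsub y m) w = C0.
Proof.
  intros M0 Madd Msc Mcl y.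
  set (E := fun r => exists h, M h /\ r = - nsq (vsub y h)).
  assert (Hb : bound E).
  { exists 0. intros r [h [_ ->]]. pose proof (nsq_ge0 X (vsub y h)). lra. }
  assert (Hne : exists r, E r) by (exists (- nsq (vsub y vzero)); exists vzero; auto).
  destruct (completeness E Hb Hne) as [L [HL1 HL2]].
  set (d2 := - L).
  assert (F1 : forall h, M h -> d2 <= nsq (vsub y h)).
  { intros h Hh. assert (E (- nsq (vsub y h))) by (exists h; auto). specialize (HL1 _ H). unfold d2. lra. }
  assert (F2 : forall eps, eps > 0 -> exists h, M h /\ nsq (vsub y h) < d2 + eps).
  { intros eps He. apply NNPP. intro Hn.
    assert (is_upper_bound E (L - eps)).
    { intros r [h [Hh ->]]. destruct (Rle_dec (- nsq (vsub y h)) (L - eps)); auto.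
      exfalso. apply Hn. exists h. split; auto. unfold d2. lra. }
    specialize (HL2 _ H). lra. }
  assert (Hd0 : 0 <= d2).
  { assert (is_upper_bound E 0) by (intros r [h [_ ->]]; pose proof (nsq_ge0 X (vsub y h)); lra).
    specialize (HL2 _ H). unfold d2; lra. }
  destruct (choice' (fun n h => M h /\ nsq (vsub y h) < d2 + / (INR n + 1))) as [m Hm].
  { intro n. apply F2. apply inv_pos. }
  assert (Hc : cauchy m).
  { intros eps He. destruct (small_inv (eps/4)) as [N HN]; [lra|]. exists N. intros n k Hn Hk.
    destruct (Hm n) as [Mn Hn']. destruct (Hm k) as [Mk Hk'].
    set (mid := vscal (rs (/2)) (vadd (m n) (m k))).
    assert (Mmid : M mid) by (apply Msc; apply Madd; auto).
    pose proof (F1 _ Mmid).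
    pose proof (parallelogram X (vsub y (m n)) (vsub y (m k))) as Hp.
    replace (vadd (vsub y (m n)) (vsub y (m k))) with (vscal (rs 2) (vsub y mid)) in Hp by (unfold mid; veqf).
    replace (vsub (vsub y (m n)) (vsub y (m k))) with (vsub (m k) (m n)) in Hp by veq.
    rewrite nsq_scal, (nsq_sub_sym X (m k)) in Hp. simpl in Hp.
    pose proof (HN n Hn). pose proof (HN k Hk). lra. }
  destruct (complete' X m Hc) as [l Hl].
  assert (Ml : M l) by (apply (Mcl m l); auto; intro n; apply Hm).
  assert (Hyl : nsq (vsub y l) <= d2).
  { assert (forall eps, eps > 0 -> nsq (vsub y l) <= d2 + eps).
    { intros eps He. set (e := eps / (3 * (d2 + 1))).
      assert (He0 : 0 < e) by (unfold e; apply Rdiv_lt_0_compat; lra).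
      assert (HeK : e * (d2 + 1) = eps / 3) by (unfold e; field; lra).
      destruct (small_inv (eps/3)) as [N1 HN1]; [lra|].
      destruct (Hl ((eps/3) / (1 + / e))) as [N2 HN2].
      { apply Rdiv_lt_0_compat; [lra|]. pose proof (Rinv_0_lt_compat e He0). lra. }
      set (n := max N1 N2).
      pose proof (HN1 n ltac:(unfold n; lia)) as Hi. pose proof (HN2 n ltac:(unfold n; lia)) as HB.
      destruct (Hm n) as [_ HA].
      pose proof (nsq_add_le X (vsub y (m n)) (vsub (m n) l) e He0) as Hadd.
      replace (vadd (vsub y (m n)) (vsub (m n) l)) with (vsub y l) in Hadd by veq.
      assert (Hie : 0 < 1 + / e) by (pose proof (Rinv_0_lt_compat e He0); lra).
      assert (HB' : (1 + / e) * nsq (vsub (m n) l) < eps / 3).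
      { apply (Rmult_lt_compat_l (1 + / e)) in HB; auto.
        replace ((1 + / e) * (eps / 3 / (1 + / e))) with (eps/3) in HB by (field; lra). exact HB. }
      pose proof (inv_le1 n). pose proof (nsq_ge0 X (vsub y (m n))).
      assert (e * nsq (vsub y (m n)) <= e * (d2 + 1)) by (apply Rmult_le_compat_l; lra).
      lra. }
    destruct (Rle_dec (nsq (vsub y l)) d2) as [|Hn]; auto.
    specialize (H ((nsq (vsub y l) - d2)/2) ltac:(lra)). lra. }
  exists l. split; auto. intros w Mw.
  set (r := vsub y l).
  assert (Hv : forall c, nsq r <= nsq (vsub r (vscal c w))).
  { intro c. assert (M (vadd l (vscal c w))) by (apply Madd; auto).
    pose proof (F1 _ H). replace (vsub y (vadd l (vscal c w))) with (vsub r (vscal c w)) in H0 by (unfold r; veq).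
    unfold r in *. lra. }
  pose proof (nsq_ge0 X w).
  apply Ceq; simpl.
  - apply (quad_zero _ (nsq w)); auto. intro s. specialize (Hv (rs s)). rewrite nsq_var_re in Hv. lra.
  - apply (quad_zero _ (nsq w)); auto. intro s. specialize (Hv (mkC 0 s)). rewrite nsq_var_im in Hv. lra.
Qed.

Definition rng (X : Hilbert) (T : rel X) c (h : X) := exists x f, T x f /\ h = vsub f (vscal c x).

Lemma rng_closed (X : Hilbert) (T : rel X) t : is_subspace X T -> closed_rel X T -> hermitian X T -> t <> 0 ->
  forall u l, (forall n, rng X T (mkC 0 t) (u n)) -> conv u l -> rng X T (mkC 0 t) l.
Proof.
  intros HS HC HH Ht u l Hu Hl.
  destruct (choice' (fun n (p : X * X) => T (fst p) (snd p) /\ u n = vsub (snd p) (vscal (mkC 0 t) (fst p)))) as [p Hp].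
  { intro n. destruct (Hu n) as [x [f [H1 H2]]]. exists (x, f). auto. }
  set (xs := fun n => fst (p n)). set (fs := fun n => snd (p n)).
  assert (Ht2 : 0 < t * t) by nra.
  assert (Hcx : cauchy xs).
  { intros eps He. destruct (conv_cauchy X u l Hl (eps * (t*t))) as [N HN]; [nra|]. exists N.
    intros n k Hn Hk. specialize (HN n k Hn Hk).
    destruct (Hp n) as [Tn En]. destruct (Hp k) as [Tk Ek].
    pose proof (T_sub X T _ _ _ _ HS Tn Tk) as Td.
    pose proof (nsq_resolv X _ _ t (herm_sym X T _ _ HH Td)) as Hr.
    replace (vsub (vsub (snd (p n)) (snd (p k))) (vscal (mkC 0 t) (vsub (fst (p n)) (fst (p k)))))
      with (vsub (u n) (u k)) in Hr by (rewrite En, Ek; veq).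
    pose proof (nsq_ge0 X (vsub (snd (p n)) (snd (p k)))).
    unfold xs. nra. }
  destruct (complete' X xs Hcx) as [x Hx].
  assert (Tl : T x (vadd l (vscal (mkC 0 t) x))).
  { apply (closed' X T xs fs); auto.
    - intro n. apply Hp.
    - intros eps He. destruct (Hl (eps/4)) as [N1 H1]; [lra|].
      destruct (Hx (eps/(4*(t*t)))) as [N2 H2]. { apply Rdiv_lt_0_compat; lra. }
      exists (max N1 N2). intros n Hn. specialize (H1 n ltac:(lia)). specialize (H2 n ltac:(lia)).
      destruct (Hp n) as [_ En].
      replace (vsub (fs n) (vadd l (vscal (mkC 0 t) x))) with
        (vadd (vsub (u n) l) (vscal (mkC 0 t) (vsub (xs n) x))) by (unfold fs, xs; rewrite En; veq).
      pose proof (nsq_add_le2 X (vsub (u n) l) (vscal (mkC 0 t) (vsub (xs n) x))).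
      rewrite nsq_scal in H. simpl in H.
      assert ((0 * 0 + t * t) * nsq (vsub (xs n) x) < eps / 4).
      { replace (0*0 + t*t) with (t*t) by ring.
        apply (Rmult_lt_compat_l (t*t)) in H2; auto. replace (t * t * (eps / (4 * (t * t)))) with (eps/4) in H2 by (field; lra). exact H2. }
      lra. }
  exists x, (vadd l (vscal (mkC 0 t) x)). split; auto. veq.
Qed.

Lemma range_full (X : Hilbert) (T : rel X) t : is_subspace X T -> closed_rel X T -> hermitian X T -> t <> 0 ->
  (forall v, (forall x f, T x f -> ip (vsub f (vscal (mkC 0 t) x)) v = C0) -> v = vzero) ->
  forall h, exists x f, T x f /\ h = vsub f (vscal (mkC 0 t) x).
Proof.
  intros HS HC HH Ht Hperp h.
  destruct (proj_exists X (rng X T (mkC 0 t))) with (y := h) as [m [Mm Hm]].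
  - exists vzero, vzero. split. apply HS. veq.
  - intros a b [x1 [f1 [T1 ->]]] [x2 [f2 [T2 ->]]]. exists (vadd x1 x2), (vadd f1 f2). split.
    apply HS; auto. veq.
  - intros s a [x1 [f1 [T1 ->]]]. exists (vscal s x1), (vscal s f1). split. apply HS; auto. veq.
  - apply rng_closed; auto.
  - assert (vsub h m = vzero).
    { apply Hperp. intros x f Txf. rewrite ip_conj_sym, Hm. ceq. exists x, f; auto. }
    apply sub_zero in H. subst h. exact Mm.
Qed.

Lemma closed_hyp_conv (X : Hilbert) (u v : nat -> X) x f :
  (forall eps, eps > 0 -> exists N, forall n, (n >= N)%nat -> norm2 X (vsub (u n) x) (vsub (v n) f) < eps) ->
  conv u x /\ conv v f.
Proof.
  intro H. split; intros eps He; destruct (H (sqrt eps)) as [N HN]; try (apply sqrt_lt_R0; auto);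
  exists N; intros n Hn; specialize (HN n Hn); unfold norm2 in HN;
  pose proof (nsq_ge0 X (vsub (u n) x)); pose proof (nsq_ge0 X (vsub (v n) f));
  apply sqrt_lt_0_alt in HN; unfold nsq in *; lra.
Qed.

Lemma small_re (X : Hilbert) (a b : X) eps : eps > 0 -> nsq a < eps * eps / (4 * (nsq b + 1)) ->
  Rabs (Re (ip a b)) < eps / 2 /\ Rabs (Im (ip a b)) < eps / 2.
Proof.
  intros He Ha. pose proof (nsq_ge0 X b) as Hb.
  set (e := 2 * (nsq b + 1) / eps).
  assert (He0 : 0 < e) by (unfold e; apply Rdiv_lt_0_compat; lra).
  assert (H1 : e * nsq a < eps / 2).
  { unfold e. apply (Rmult_lt_compat_l (2 * (nsq b + 1) / eps)) in Ha; [|apply Rdiv_lt_0_compat; lra].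
    replace (2 * (nsq b + 1) / eps * (eps * eps / (4 * (nsq b + 1)))) with (eps/2) in Ha by (field; lra). exact Ha. }
  assert (H2 : / e * nsq b < eps / 2).
  { unfold e. replace (/ (2 * (nsq b + 1) / eps)) with (eps / (2 * (nsq b + 1))) by (field; lra).
    apply (Rmult_lt_reg_r (2 * (nsq b + 1))); [lra|].
    replace (eps / (2 * (nsq b + 1)) * nsq b * (2 * (nsq b + 1))) with (eps * nsq b) by (field; lra). nra. }
  pose proof (re_bound_abs X a b e He0). pose proof (im_bound_abs X a b e He0). split; lra.
Qed.

Lemma adjoint_closed (X : Hilbert) (T : rel X) : closed_rel X (adjoint X T).
Proof.
  intros u v y g Huv Hc. destruct (closed_hyp_conv X u v y g Hc) as [Hu Hv].
  intros x f Txf.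
  set (c := Cadd (ip g x) (Copp (ip y f))).
  assert (Hall : forall n, c = Cadd (ip (vsub g (v n)) x) (Copp (ip (vsub y (u n)) f))).
  { intro n. pose proof (Huv n x f Txf) as E. unfold c. ipexp. rewrite E. ceq. }
  assert (Hs : forall eps, eps > 0 -> Rabs (Re c) < eps /\ Rabs (Im c) < eps).
  { intros eps He.
    destruct (Hv (eps * eps / (4 * (nsq x + 1)))) as [N1 H1].
    { pose proof (nsq_ge0 X x). apply Rdiv_lt_0_compat; nra. }
    destruct (Hu (eps * eps / (4 * (nsq f + 1)))) as [N2 H2].
    { pose proof (nsq_ge0 X f). apply Rdiv_lt_0_compat; nra. }
    set (n := max N1 N2). specialize (H1 n ltac:(unfold n; lia)). specialize (H2 n ltac:(unfold n; lia)).
    rewrite nsq_sub_sym in H1, H2.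
    destruct (small_re X _ _ eps He H1) as [A1 A2]. destruct (small_re X _ _ eps He H2) as [B1 B2].
    rewrite (Hall n). cunf.
    split; eapply Rle_lt_trans; try apply Rabs_triang; rewrite Rabs_Ropp; lra. }
  assert (Hc0 : c = C0).
  { apply Ceq; simpl.
    - destruct (Req_dec (Re c) 0) as [|Hn]; auto. exfalso.
      destruct (Hs (Rabs (Re c))) as [H _]. apply Rabs_pos_lt; auto. lra.
    - destruct (Req_dec (Im c) 0) as [|Hn]; auto. exfalso.
      destruct (Hs (Rabs (Im c))) as [_ H]. apply Rabs_pos_lt; auto. lra. }
  unfold c in Hc0. apply Ceq; cunf; injection Hc0; intros; lra.
Qed.

Lemma sa_closed (X : Hilbert) (S : rel X) : self_adjoint X S -> closed_rel X S.
Proof.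
  intros H u v x f Huv Hc. apply H. apply (adjoint_closed X S u v x f); auto.
  intro n. apply H. auto.
Qed.

Lemma sa_herm (X : Hilbert) (S : rel X) : self_adjoint X S -> hermitian X S.
Proof. intros H x f Hx. apply H. auto. Qed.

Lemma sa_perp (X : Hilbert) (S : rel X) t : self_adjoint X S -> t <> 0 ->
  forall w, (forall x f, S x f -> ip (vsub f (vscal (mkC 0 t) x)) w = C0) -> w = vzero.
Proof.
  intros HS Ht w Hw.
  assert (Sw : S w (vscal (mkC 0 (- t)) w)).
  { apply HS. intros x f Sxf. specialize (Hw x f Sxf). revert Hw. ipexp.
    rewrite (ip_conj_sym X f w), (ip_conj_sym X x w). intro Hw. apply Ceq; cunf; injection Hw; intros; lra. }
  pose proof (herm_sym X S _ _ (sa_herm X S HS) Sw) as E. revert E. ipexp. intro E.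
  apply nsq_zero. unfold nsq. apply (f_equal Im) in E. cunf. nra.
Qed.

Lemma rel_sum_subspace (X : Hilbert) (S A : rel X) : is_subspace X S -> is_subspace X A ->
  is_subspace X (rel_sum X S A).
Proof.
  intros [S0 [Sa Ss]] [A0 [Aa As]]. split; [|split].
  - exists vzero, vzero. repeat split; auto. veq.
  - intros x h1 y h2 [f1 [g1 [H1 [H2 ->]]]] [f2 [g2 [H3 [H4 ->]]]].
    exists (vadd f1 f2), (vadd g1 g2). repeat split; auto. veq.
  - intros a x h [f1 [g1 [H1 [H2 ->]]]]. exists (vscal a f1), (vscal a g1). repeat split; auto. veq.
Qed.

Lemma est a b q t F Xn : 0 <= a -> 0 <= b -> 0 <= F -> 0 <= Xn -> 0 < t -> a < q ->
  b * b <= (q * q - a * a) * (t * t) -> (a * F + b * Xn) * (a * F + b * Xn) <= q * q * (F * F + t * t * Xn * Xn).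
Proof.
  intros Ha Hb0 HF HX Ht Haq Hbb. set (c := b / t). assert (Hb : b = c * t) by (unfold c; field; lra).
  assert (Hc : c * c <= q * q - a * a).
  { rewrite Hb in Hbb. apply (Rmult_le_reg_r (t*t)). nra. lra. }
  rewrite Hb. clearbody c. clear Hb Hbb.
  assert ((a * F + c * t * Xn) * (a * F + c * t * Xn) <= (a*a + c*c) * (F*F + t*t*Xn*Xn)).
  { assert (0 <= (a * t * Xn - c * F) * (a * t * Xn - c * F)) by (pose proof (Rle_0_sqr (a * t * Xn - c * F)); unfold Rsqr in *; lra).
    assert ((a*a + c*c) * (F*F + t*t*Xn*Xn) - (a * F + c * t * Xn) * (a * F + c * t * Xn) = (a * t * Xn - c * F) * (a * t * Xn - c * F)) by ring.
    lra. }
  assert (0 <= F * F + t * t * Xn * Xn) by nra.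
  assert ((a*a + c*c) * (F*F + t*t*Xn*Xn) <= q*q * (F*F + t*t*Xn*Xn)) by (apply Rmult_le_compat_r; lra). lra.
Qed.

Lemma norm_sq (X : Hilbert) (x : X) : norm x * norm x = nsq x.
Proof. unfold norm. apply sqrt_sqrt. apply nsq_ge0. Qed.
Lemma norm_ge0 (X : Hilbert) (x : X) : 0 <= norm x.
Proof. unfold norm. apply sqrt_pos. Qed.

Lemma T_perp (X : Hilbert) (S A : rel X) a b q t s :
  is_subspace X S -> self_adjoint X S -> is_subspace X A ->
  rel_bounded X (rel_comp X (orth_proj X (orth X (mul0 X S))) (op_part X A)) (op_part X S) ->
  (forall x y z, op_part X S x y -> rel_comp X (orth_proj X (orth X (mul0 X S))) (op_part X A) x z ->
     norm z <= a * norm y + b * norm x) ->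
  0 <= a -> 0 <= b -> a < q -> q < 1 -> 0 < t -> b * b <= (q * q - a * a) * (t * t) -> s * s = t * t ->
  forall v, (forall x h, rel_sum X S A x h -> ip (vsub h (vscal (mkC 0 s) x)) v = C0) -> v = vzero.
Proof.
  intros HSs HSa HAs [Hdom _] Hbd Ha Hb Haq Hq1 Ht Hbt Hst v Hv.
  assert (Hs0 : s <> 0) by (intro; subst; nra).
  assert (Horth : orth X (mul0 X S) v).
  { intros s0 Hs0'. unfold mul0 in Hs0'.
    assert (rel_sum X S A vzero (vadd s0 vzero)).
    { exists s0, vzero. repeat split; auto. apply HAs. }
    specialize (Hv _ _ H). revert Hv. ipexp. intro Hv. rewrite ip_conj_sym.
    apply Ceq; cunf; injection Hv; intros; lra. }
  destruct (range_full X S s HSs (sa_closed X S HSa) (sa_herm X S HSa) Hs0 (sa_perp X S s HSa Hs0) v)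
    as [x [f [Sxf Ev]]].
  assert (Hop : op_part X S x f).
  { split; auto. intros s0 Hs0'.
    assert (E1 : ip s0 x = C0) by (rewrite (proj1 (HSa vzero s0) Hs0' x f Sxf); apply ip_zero_l).
    assert (E2 : ip v s0 = C0) by (apply Horth; exact Hs0').
    replace f with (vadd v (vscal (mkC 0 s) x)) by (rewrite Ev; veq).
    ipexp. rewrite E2, (ip_conj_sym X s0 x), E1. ceq. }
  destruct (Hdom x (ex_intro _ f Hop)) as [z Hz].
  pose proof (Hbd x f z Hop Hz) as Hn.
  destruct Hz as [g [[Axg _] [_ Hproj]]].
  assert (Tx : rel_sum X S A x (vadd f g)) by (exists f, g; auto).
  pose proof (Hv _ _ Tx) as E3. pose proof (Hproj v Horth) as E4.
  assert (E5 : ip (vadd v z) v = C0).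
  { replace (vadd v z) with (vsub (vsub (vadd f g) (vscal (mkC 0 s) x)) (vsub g z)) by (rewrite Ev; veq).
    rewrite ip_sub_l, E3, E4. ceq. }
  assert (Hvz : nsq v <= nsq z).
  { pose proof (re_bound X (vopp z) v 1 ltac:(lra)). rewrite Rinv_1 in H.
    revert H. unfold nsq. ipexp. apply (f_equal Re) in E5. revert E5. ipexp. cunf. intros. lra. }
  assert (Hnv : nsq v = nsq f + t * t * nsq x).
  { rewrite Ev, nsq_resolv. rewrite Hst. reflexivity. apply (herm_sym X S); auto. apply sa_herm; auto. }
  pose proof (est a b q t (norm f) (norm x) Ha Hb (norm_ge0 X f) (norm_ge0 X x) Ht Haq Hbt) as Hest.
  rewrite !Rmult_assoc, !norm_sq in Hest. rewrite <- Rmult_assoc in Hest.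
  replace (q * q * (nsq f + t * (t * nsq x))) with (q * q * nsq v) in Hest by (rewrite Hnv; ring).
  assert (nsq z <= (a * norm f + b * norm x) * (a * norm f + b * norm x)).
  { rewrite <- norm_sq. pose proof (norm_ge0 X z). apply Rmult_le_compat; auto. }
  pose proof (nsq_ge0 X v).
  assert (Hqq : q * q < 1) by nra.
  assert (nsq v <= q * q * nsq v) by lra.
  apply nsq_zero. nra.
Qed.

Lemma adj_sub (X : Hilbert) (T : rel X) y g x f : adjoint X T y g -> adjoint X T x f ->
  adjoint X T (vsub y x) (vsub g f).
Proof. intros H1 H2 u h Tu. ipexp. rewrite (H1 u h Tu), (H2 u h Tu). reflexivity. Qed.

Theorem theorem4p2 (X : Hilbert) (S A : rel X) :
  is_subspace X S -> self_adjoint X S ->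
  is_subspace X A -> closed_rel X A -> hermitian X A ->
  closed_rel X (rel_sum X S A) -> hermitian X (rel_sum X S A) ->
  (forall x, dom X S x -> dom X A x) ->
  rel_bounded X (rel_comp X (orth_proj X (orth X (mul0 X S))) (op_part X A))
                (op_part X S) ->
  rel_bound_lt X (rel_comp X (orth_proj X (orth X (mul0 X S))) (op_part X A))
               (op_part X S) 1 ->
  self_adjoint X (rel_sum X S A).
Proof.
  intros HSs HSa HAs _ _ HTc HTh _ Hrb [beta [[Hinf1 Hinf2] Hbeta]].
  assert (Ha : exists a, bound_const X (rel_comp X (orth_proj X (orth X (mul0 X S))) (op_part X A))
               (op_part X S) a /\ a < 1).
  { apply NNPP. intro Hn. assert (1 <= beta).
    { apply Hinf2. intros a Ha. destruct (Rle_dec 1 a); auto. exfalso. apply Hn. exists a. split; auto. lra. }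
    lra. }
  destruct Ha as [a [[Ha0 [b [Hb0 Hbd]]] Ha1]].
  set (q := (1 + a) / 2).
  assert (Haq : a < q) by (unfold q; lra). assert (Hq1 : q < 1) by (unfold q; lra).
  assert (Hqa : 0 < q * q - a * a) by nra.
  set (t := 1 + b * b / (q * q - a * a)).
  assert (HK : 0 <= b * b / (q * q - a * a)) by (unfold Rdiv; apply Rmult_le_pos; [nra | left; apply Rinv_0_lt_compat; lra]).
  assert (Ht : 0 < t) by (unfold t; lra).
  assert (Hbt : b * b <= (q * q - a * a) * (t * t)).
  { assert (b * b = (q * q - a * a) * (b * b / (q * q - a * a))) by (field; lra).
    assert (b * b / (q * q - a * a) <= t * t) by (unfold t; nra). nra. }
  set (T := rel_sum X S A).
  assert (HTs : is_subspace X T) by (apply rel_sum_subspace; auto).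
  assert (Hperp : forall s, s * s = t * t -> forall v, (forall x h, T x h -> ip (vsub h (vscal (mkC 0 s) x)) v = C0) -> v = vzero).
  { intros s Hs. apply (T_perp X S A a b q t s); auto. }
  assert (Htn : t <> 0) by lra. assert (Htn' : - t <> 0) by lra.
  pose proof (range_full X T t HTs HTc HTh Htn (Hperp t eq_refl)) as R1.
  pose proof (range_full X T (- t) HTs HTc HTh Htn' (Hperp (- t) ltac:(ring))) as R2.
  intros y g. split; [apply HTh|]. intro Hadj.
  destruct (R1 (vsub g (vscal (mkC 0 t) y))) as [x [f [Txf E1]]].
  set (w := vsub y x).
  pose proof (adj_sub X T y g x f Hadj (HTh x f Txf)) as Hw. change (vsub y x) with w in Hw.
  replace (vsub g f) with (vscal (mkC 0 t) w) in Hw.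
  2: { unfold w. apply veq_by_ip. intro z. apply (f_equal (fun k => ip k z)) in E1. revert E1. ipexp. intro E1.
       apply Ceq; cunf; injection E1; intros; lra. }
  destruct (R2 w) as [u [h [Tuh E2]]].
  assert (Hw0 : w = vzero).
  { apply nsq_zero. unfold nsq. pose proof (Hw u h Tuh) as E3.
    assert (ip w w = ip w (vsub h (vscal (mkC 0 (-t)) u))) by (rewrite <- E2; reflexivity).
    rewrite H. ipexp. rewrite <- E3. ipexp. cunf. ring. }
  assert (y = x) by (apply sub_zero; exact Hw0).
  subst y. assert (g = f).
  { apply veq_by_ip. intro z. apply (f_equal (fun k => ip k z)) in E1. revert E1. ipexp. intro E1.
    apply Ceq; cunf; injection E1; intros; lra. }
  subst g. exact Txf.
Qed.
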